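(* When Algorithm A (described below) is applied to a sequence $\epsilon$, producing $\epsilon'$, there is no position $i$ that is a transient occurrence of $q$.
   Context: The reduction of an integer word replaces each occurrence of its $k$-th smallest distinct value by $k-1$; a consecutive pattern $\underline{p_1p_2p_3p_4}$ occurs in a sequence at position $i$ if the reduction of its entries in positions $i,\dots,i+3$ equals $p_1p_2p_3p_4$. Let $p=\underline{0102}$ and $q=\underline{0112}$. Algorithm A, on input an integer sequence $\mathrm{seq}=\epsilon_1\cdots\epsilon_n$: let $E_p$, $E_q$ be the sets of positions of occurrences of $p$, resp. $q$, in the input sequence; set $\mathrm{last}:=$ null. For $i=1,2,\dots,n$ in order: let $N_p,N_q$ be the sets of positions of occurrences of $p$, resp. $q$, in the current sequence. If $i-2\in E_p$: set $\mathrm{last}:=\mathrm{seq}[i]$ and $\mathrm{seq}[i]:=\mathrm{seq}[i-1]$. Else if $i-2\in E_q$: set $\mathrm{last}:=\mathrm{seq}[i]$ and $\mathrm{seq}[i]:=\mathrm{seq}[i-2]$. Else if $i-2\in N_p$ or $i-2\in N_q$: swap the values of $\mathrm{seq}[i]$ and $\mathrm{last}$. Output $\mathrm{seq}$. With $\epsilon$ the input and $\epsilon'$ the output: position $i$ is an original occurrence of $q$ if $\epsilon_i<\epsilon_{i+1}=\epsilon_{i+2}<\epsilon_{i+3}$; it is a transient occurrence of $q$ if it is not an original occurrence of $q$ but $\epsilon'_i<\epsilon_{i+1}=\epsilon_{i+2}<\epsilon_{i+3}$. *)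

(* Defs.v *)
From mathcomp Require Import all_boot all_order all_algebra.
Set Implicit Arguments. Unset Strict Implicit. Unset Printing Implicit Defensive.
Import Order.TTheory GRing.Theory Num.Theory.
Local Open Scope ring_scope.

(* Sequences are words over int; positions are 1-based as in the paper. *)

Definition ent (s : seq int) (i : nat) : int := nth 0 s i.-1.

Definition reduction (w : seq int) : seq nat :=
  let vals := sort <=%R (undup w) in [seq index x vals | x <- w].

Definition occurs (pat : seq nat) (s : seq int) (i : nat) : bool :=
  [&& (1 <= i)%N, (i + 3 <= size s)%N &
      reduction (take 4 (drop i.-1 s)) == pat].

Definition pat_p : seq nat := [:: 0; 1; 0; 2]%N.
Definition pat_q : seq nat := [:: 0; 1; 1; 2]%N.

Definition upd (s : seq int) (i : nat) (v : int) : seq int := set_nth 0 s i.-1 v.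

(* One iteration (index i) of Algorithm A; state = (current sequence, last).
   [last] = None represents "null".  The tested position is i-2 (truncated
   subtraction: for i <= 2 this gives 0, which is never an occurrence). *)
Definition algA_step (eps : seq int) (st : seq int * option int) (i : nat)
  : seq int * option int :=
  let: (cur, last) := st in
  if occurs pat_p eps (i - 2) then (upd cur i (ent cur i.-1), Some (ent cur i))
  else if occurs pat_q eps (i - 2) then (upd cur i (ent cur (i - 2)), Some (ent cur i))
  else if occurs pat_p cur (i - 2) || occurs pat_q cur (i - 2) then
    match last with
    | Some v => (upd cur i v, Some (ent cur i))
    | None => (cur, None) (* unreachable *)
    end
  else (cur, last).

Definition algorithmA (eps : seq int) : seq int :=
  (foldl (algA_step eps) (eps, None) (iota 1 (size eps))).1.

Definition original_q (eps : seq int) (i : nat) : Prop :=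
  [/\ (1 <= i)%N, (i + 3 <= size eps)%N &
   ent eps i < ent eps i.+1 /\ ent eps i.+1 = ent eps i.+2 /\ ent eps i.+2 < ent eps i.+3].

Definition transient_q (eps : seq int) (i : nat) : Prop :=
  let eps' := algorithmA eps in
  [/\ (1 <= i)%N, (i + 3 <= size eps)%N, ~ original_q eps i &
   ent eps' i < ent eps i.+1 /\ ent eps i.+1 = ent eps i.+2 /\ ent eps i.+2 < ent eps i.+3].

(* Main.v *)
Require Import Defs.
From mathcomp Require Import all_boot all_order all_algebra.
From mathcomp Require Import zify.
Import Order.TTheory GRing.Theory Num.Theory.

Lemma occ_lt (pat : seq nat) s j :
  (nth 0 pat 2 < nth 0 pat 3)%N -> occurs pat s j ->
  (ent s (j + 2) < ent s (j + 3))%R.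
Proof.
move=> hp /and3P [h1 h2 /eqP hr].
set w := take 4 (drop j.-1 s) in hr.
have sw : size w = 4%N by rewrite size_take size_drop; case: ifP => //; lia.
have ew k : (k < 4)%N -> nth 0%R w k = ent s (j + k).
  move=> hk; rewrite /w nth_take // nth_drop /ent; congr nth; lia.
set vals := sort <=%R (undup w) in hr.
have hn k : (k < 4)%N -> index (ent s (j + k)) vals = nth 0%N pat k.
  move=> hk; rewrite -hr /reduction -/vals (nth_map 0%R) ?sw // ew //.
have mem k : (k < 4)%N -> ent s (j + k) \in vals.
  move=> hk; rewrite mem_sort mem_undup -ew //; apply: mem_nth; rewrite sw //.
have srt : sorted <=%R vals by apply: sort_sorted; exact: le_total.
rewrite lt_neqAle; apply/andP; split.
  apply/negP => /eqP he; move: hp; rewrite -(hn 2%N) // -(hn 3%N) // he ltnn //.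
have := @sorted_leq_index _ <=%R (@le_trans _ int) (@lexx _ int) _ srt _ _ (mem 2%N isT) (mem 3%N isT); apply.
rewrite (hn 2%N) // (hn 3%N) //; exact: ltnW.
Qed.

Lemma ent_upd c k v j : (1 <= k)%N -> (1 <= j)%N -> k != j -> ent (upd c k v) j = ent c j.
Proof.
move=> hk hj hkj; rewrite /ent /upd nth_set_nth /=.
case: ifP => // /eqP h; exfalso; move/eqP: hkj; apply; lia.
Qed.

Lemma fold_keep eps l st j : (1 <= j)%N -> all (fun k => (1 <= k)%N && (k != j)) l ->
  ent (foldl (algA_step eps) st l).1 j = ent st.1 j.
Proof.
elim: l st => [|k l IH] [c la] hj //= /andP [/andP [hk hkj] hl].
rewrite IH //; rewrite /algA_step.
case: ifP => _; first by rewrite /= ent_upd.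
case: ifP => _; first by rewrite /= ent_upd.
case: ifP => _ //; case: la => [v|] //=; by rewrite ent_upd.
Qed.

Lemma step_i eps c la i : ent c i = ent eps i -> ent c i.+1 = ent eps i.+1 ->
  ent (algA_step eps (c, la) i).1 i = ent eps i \/ (ent eps i < ent eps i.+1)%R.
Proof.
move=> e1 e2; rewrite /algA_step.
have key s : occurs pat_p s (i - 2) || occurs pat_q s (i - 2) ->
    (ent s i < ent s i.+1)%R.
  move=> h; have h1 : (1 <= i - 2)%N by case/orP: h => /and3P [].
  have [j ej] : exists j, i = (j + 2)%N by exists (i - 2); lia.
  rewrite ej addnK in h; rewrite ej (_ : (j + 2).+1 = j + 3)%N; last by lia.
  by case/orP: h => h; apply: (occ_lt _ _ _ _ h).
case: ifP => hp; first by right; apply: key; rewrite hp.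
case: ifP => hq; first by right; apply: key; rewrite hq orbT.
case: ifP => hc; last by left.
right; rewrite -e1 -e2; exact: key.
Qed.

Theorem corollary1 (eps : seq int) (i : nat) : ~ transient_q eps i.
Proof.
case=> h1 h2 horig [hlt [he hlt2]]; apply: horig; split => //.
split; last by split.
suff : ent (algorithmA eps) i = ent eps i \/ (ent eps i < ent eps i.+1)%R.
  by case => // E; rewrite -E.
rewrite /algorithmA.
have -> : iota 1 (size eps) = iota 1 i.-1 ++ i :: iota i.+1 (size eps - i).
  have -> : size eps = (i.-1 + (1 + (size eps - i)))%N by lia.
  rewrite iotaD iotaD /=; congr (_ ++ _ :: _); [lia | congr iota; lia].
rewrite foldl_cat /= fold_keep //; last first.
  by apply/allP => k; rewrite mem_iota => /andP [hk1 hk2]; apply/andP; split; [lia|apply/eqP; lia].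
set st := foldl _ _ _; case E : st => [c la].
have ec j : (i <= j)%N -> ent c j = ent eps j.
  move=> hj; have -> : c = st.1 by rewrite E.
  rewrite /st fold_keep //; first by lia.
  by apply/allP => k; rewrite mem_iota => /andP [hk1 hk2]; apply/andP; split; [lia|apply/eqP; lia].
by apply: step_i; apply: ec.
Qed.
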